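(* Let $\llbracket\mu\rrbracket$ be a FastPai encryption of $\mu\in\mathbb{Z}_N$ (e.g. the output of the secure comparison protocol), and let $\langle 2\alpha\rangle_0,\langle 2\alpha\rangle_1$ be integers held by $S_0$, $S_1$ respectively with $\langle 2\alpha\rangle_1-\langle 2\alpha\rangle_0=2\alpha$. Run protocol $\mathtt{C2S}$: $S_0$ sends $\llbracket\mu\rrbracket$ to $S_1$, and for $i\in\{0,1\}$, $S_i$ computes $\langle 2\alpha\mu\rangle_i=\mathrm{DDLog}_N(\llbracket\mu\rrbracket^{\langle 2\alpha\rangle_i}\bmod N^2)$. Then $\langle 2\alpha\mu\rangle_1-\langle 2\alpha\mu\rangle_0\equiv 2\alpha\cdot\mu\pmod N$.
   Context: FastPai: for a security parameter $\kappa$, $l(\kappa)=4\kappa$. $N=PQ$ with $P,Q$ primes of $n(\kappa)/2$ bits, $p,q$ odd primes of $l(\kappa)/2$ bits, $p\mid P-1$, $q\mid Q-1$, $P\equiv Q\equiv3\pmod4$, $\gcd(P-1,Q-1)=2$, $\gcd(pq,(P-1)(Q-1)/(4pq))=1$. Private key $\alpha=pq$; $\beta=(P-1)(Q-1)/(4pq)$; $h=-y_0^{2\beta}\bmod N$ for random $y_0\in\mathbb{Z}_N^*$; public key $(N,h)$. $\mathrm{Enc}(m)=(1+N)^m(h^r\bmod N)^N\bmod N^2$, $r$ uniform in $\{0,1\}^{l(\kappa)}$, written $\llbracket m\rrbracket$. Ciphertext exponentiations by (possibly negative) integers are in $\mathbb{Z}_{N^2}^*$. $\mathrm{DDLog}_N(g)=\lfloor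 g/N\rfloor\cdot(g\bmod N)^{-1}\bmod N$ for $g\in[0,N^2)$ with $g\bmod N$ invertible mod $N$. *)

(* Defs.v *)
From mathcomp Require Import all_boot all_algebra.
Set Implicit Arguments. Unset Strict Implicit. Unset Printing Implicit Defensive.
Import GRing.Theory.
Local Open Scope ring_scope.

Definition has_bits (b x : nat) : bool := (2 ^ b.-1 <= x < 2 ^ b)%N.

Definition fp_beta (P Q p q : nat) : nat := (((P - 1) * (Q - 1)) %/ (4 * p * q))%N.

Definition fp_h (N y0 beta : nat) : nat := ((N - (y0 ^ (2 * beta)) %% N) %% N)%N.

Definition fp_enc (N h m r : nat) : 'Z_(N ^ 2) :=
  (1 + (N%:R : 'Z_(N ^ 2))) ^+ m * (((h ^ r) %% N)%N%:R : 'Z_(N ^ 2)) ^+ N.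

Definition DDLog (N g : nat) : nat :=
  nat_of_ord (((g %/ N)%N%:R * (((g %% N)%N%:R : 'Z_N)^-1)) : 'Z_N).

(* Main.v *)
Require Import Defs.
From mathcomp Require Import all_boot all_algebra.
From mathcomp Require Import zify ring.
Import GRing.Theory.
Local Open Scope ring_scope.

Lemma lin1 (R : pzRingType) (y : R) m : y * y = 0 -> (1 + y) ^+ m = 1 + y *+ m.
Proof.
move=> yy; elim: m => [|m IH]; first by rewrite expr0 mulr0n addr0.
rewrite exprS IH mulrDl mul1r mulrDr mulr1 mulrnAr yy mul0rn addr0 mulrS.
by rewrite [y + _]addrC addrA.
Qed.

Lemma Zp_valr (M : nat) (x : 'Z_M) : ((val x)%:R : 'Z_M) = x.
Proof. exact: natr_Zp. Qed.

Lemma val_Zp_mul (M : nat) (x y : 'Z_M) : (1 < M)%N -> val (x * y) = ((val x * val y) %% M)%N.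
Proof. move=> M1; have -> : x * y = ((val x * val y)%N%:R : 'Z_M) by rewrite natrM !Zp_valr.
exact: val_Zp_nat. Qed.

Lemma val_Zp_nat' (M x : nat) : (1 < M)%N -> val (x%:R : 'Z_M) = (x %% M)%N.
Proof. move=> M1; exact: (@val_Zp_nat M M1 x). Qed.

Lemma Zp_eqE (N a b : nat) : (1 < N)%N -> ((a%:R : 'Z_N) = b%:R) <-> (a = b %[mod N])%N.
Proof.
move=> N1; split => [E|E].
  by move: (congr1 (fun z : 'Z_N => nat_of_ord z) E); rewrite /= !val_Zp_nat.
by apply: val_inj; rewrite /= !val_Zp_nat.
Qed.

Lemma fermat1 a p : prime p -> coprime a p -> (a ^ p.-1 = 1 %[mod p])%N.
Proof.
move=> pp cap.
have p0 : (0 < p)%N by apply: prime_gt0.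
have a0 : (0 < a)%N.
  case: a cap => // ; rewrite /coprime gcd0n => /eqP p1; by rewrite p1 in pp.
have ap0 : (0 < a ^ p.-1)%N by rewrite expn_gt0 a0.
have F := fermat_little a pp.
apply/eqP; rewrite eqn_mod_dvd //.
have: (p %| a * (a ^ p.-1 - 1))%N.
  rewrite mulnBr muln1 -expnS prednK // -eqn_mod_dvd; first by rewrite F.
  by rewrite -{1}(expn1 a) leq_pexp2l // prime_gt0.
by rewrite Gauss_dvdr // coprime_sym.
Qed.

Lemma ddlog_shift N A X : (1 < N)%N -> coprime A N ->
  DDLog N ((A * (1 + X * N)) %% (N ^ 2))%N = ((DDLog N A + X) %% N)%N.
Proof.
move=> N1 cA.
have N0 : (0 < N)%N by apply: ltnW.
have dN : (N %| N ^ 2)%N by rewrite expnS dvdn_mulr.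
have E : (A * (1 + X * N) = A * X * N + A)%N by rewrite mulnDr muln1 mulnA addnC.
set b := ((A * (1 + X * N)) %% (N ^ 2))%N.
have bmod : (b %% N = A %% N)%N by rewrite /b modn_dvdm // E modnMDl.
have bdiv : (b %/ N = (A %/ N + A * X) %% N)%N.
  rewrite /b divn_modl // E divnMDl // addnC.
  by rewrite expnS expn1 mulnK.
rewrite /DDLog bmod bdiv !Zp_nat_mod // natrD natrM.
have ur : (A%:R : 'Z_N) \is a GRing.unit by rewrite unitZpE // coprime_sym.
rewrite mulrDl [_ * X%:R]mulrC -mulrA mulrV // mulr1.
set D := (_ * _ : 'Z_N).
rewrite -{1}(@Zp_valr N D) -natrD.
exact: val_Zp_nat.
Qed.

Lemma fin_int (N D X : nat) :
  ((((D + X) %% N)%N)%:Z - D%:Z = X%:Z %[mod N%:Z])%Z.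
Proof.
by rewrite -modz_nat modzDml PoszD addrC addKr.
Qed.

Theorem theorem4 (kappa : nat) (nlen : nat -> nat) (P Q p q y0 mu r : nat)
    (s0 s1 : int) :
  prime P -> prime Q -> prime p -> prime q -> odd p -> odd q ->
  has_bits (nlen kappa)./2 P -> has_bits (nlen kappa)./2 Q ->
  has_bits (4 * kappa)./2 p -> has_bits (4 * kappa)./2 q ->
  (p %| P - 1)%N -> (q %| Q - 1)%N ->
  (P %% 4 = 3)%N -> (Q %% 4 = 3)%N ->
  gcdn (P - 1) (Q - 1) = 2%N ->
  coprime (p * q) (fp_beta P Q p q) ->
  (y0 < P * Q)%N -> coprime y0 (P * Q) ->
  (mu < P * Q)%N -> (r < 2 ^ (4 * kappa))%N ->
  s1 - s0 = (2 * (p * q))%N%:Z ->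
  let N := (P * Q)%N in
  let h := fp_h N y0 (fp_beta P Q p q) in
  let c := fp_enc N h mu r in
  ((DDLog N (val (c ^ s1)))%:Z - (DDLog N (val (c ^ s0)))%:Z
     = (2 * (p * q) * mu)%N%:Z %[mod N%:Z])%Z.
Proof.
move=> pP pQ pp pq op oq _ _ _ _ pP1 qQ1 P4 Q4 g2 _ _ cy0 _ _ hs N h c.
have P1 := prime_gt1 pP; have Q1 := prime_gt1 pQ.
have p1 := prime_gt1 pp; have q1 := prime_gt1 pq.
have N1 : (1 < N)%N by rewrite /N; nia.
have PQ : P != Q.
  apply/eqP => ePQ; move: g2; rewrite ePQ gcdnn => Q3.
  move: pP1; rewrite ePQ Q3 => /dvdn_leq /= p2.
  have p2' : p = 2%N by lia.
  by rewrite p2' in op.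
have cPQ : coprime P Q by rewrite prime_coprime // dvdn_prime2.
set beta := fp_beta P Q p q.
have beq : (2 * beta * (2 * (p * q)) = (P - 1) * (Q - 1))%N.
  have d2p : (2 * p %| P - 1)%N.
    rewrite Gauss_dvd; last by rewrite coprime2n.
    rewrite pP1 andbT; lia.
  have d2q : (2 * q %| Q - 1)%N.
    rewrite Gauss_dvd; last by rewrite coprime2n.
    rewrite qQ1 andbT; lia.
  have d4 : (4 * p * q %| (P - 1) * (Q - 1))%N.
    have -> : (4 * p * q = (2 * p) * (2 * q))%N by ring.
    exact: dvdn_mul.
  rewrite /beta /fp_beta -[RHS](divnK d4); ring.
have cyP : coprime y0 P by move: cy0; rewrite coprimeMr => /andP[].
have cyQ : coprime y0 Q by move: cy0; rewrite coprimeMr => /andP[].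
have yN : (y0 ^ ((P - 1) * (Q - 1)) = 1 %[mod N])%N.
  apply/eqP; rewrite /N chinese_remainder //; apply/andP; split; apply/eqP.
    by rewrite expnM -modnXm !subn1 (@fermat1 y0 P pP cyP) modnXm exp1n.
  by rewrite mulnC expnM -modnXm !subn1 (@fermat1 y0 Q pQ cyQ) modnXm exp1n.
have yR : (y0%:R : 'Z_N) ^+ ((P - 1) * (Q - 1)) = 1.
  by rewrite -natrX; apply/(@Zp_eqE N _ 1 N1).
have N0R : (N%:R : 'Z_N) = 0.
  by apply/(@Zp_eqE N _ 0 N1); rewrite modnn mod0n.
have hR : (h%:R : 'Z_N) = - (y0%:R ^+ (2 * beta)).
  rewrite /h /fp_h Zp_nat_mod // natrB; last by apply: ltnW; rewrite ltn_pmod // ltnW.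
  by rewrite N0R sub0r Zp_nat_mod // natrX.
set e := (h ^ r %% N)%N.
have eR : (e%:R : 'Z_N) ^+ (2 * (p * q)) = 1.
  rewrite Zp_nat_mod // natrX hR -exprM [(r * _)%N]mulnC exprM [X in X ^+ r]exprM sqrrN -!exprM.
  have -> : (2 * beta * (2 * (p * q * r)) = (2 * beta * (2 * (p * q))) * r)%N by ring.
  by rewrite beq exprM yR expr1n.
have ceN : coprime N e.
  rewrite /e coprime_modr coprimeXr // -unitZpE // hR unitrN unitrX //.
  by rewrite unitZpE // coprime_sym.
have e1 : (e ^ (2 * (p * q)) = 1 %[mod N])%N by apply/(@Zp_eqE N _ 1 N1); rewrite natrX.
set M := (N ^ 2)%N.
have M1 : (1 < M)%N by rewrite /M -mulnn; rewrite (leq_trans N1) // leq_pmulr // ltnW.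
set n : 'Z_M := N%:R.
have nn : n * n = 0.
  rewrite /n -natrM mulnn -/M.
  by apply/(@Zp_eqE M _ 0 M1); rewrite modnn mod0n.
have cpM : forall x, coprime N x -> coprime M x.
  by move=> x cx; rewrite /M coprime_pexpl.
have u1 : ((1 + N)%N%:R : 'Z_M) \is a GRing.unit by rewrite unitZpE // cpM // add1n coprimenS.
have u2 : (e%:R : 'Z_M) \is a GRing.unit by rewrite unitZpE // cpM.
have cu : c \is a GRing.unit.
  rewrite /c /fp_enc -/e unitrM !unitrX //.
  by move: u1; rewrite natrD mulr1n.
have cE : c = (1 + n) ^+ mu * (e%:R : 'Z_M) ^+ N by [].
set X := (2 * (p * q) * mu)%N.
have c2 : c ^+ (2 * (p * q)) = (1 + X * N)%N%:R.
  rewrite cE exprMn -!exprM lin1 // [(N * _)%N]mulnC exprM.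
  have ek := divn_eq (e ^ (2 * (p * q))) N.
  rewrite e1 (modn_small N1) in ek.
  rewrite -natrX ek natrD natrM -/n mulr_natl [(n *+ (_ %/ N) + _)]addrC mulr1n.
  set k := (_ %/ N)%N.
  have E2 : (1 + n *+ k) ^+ N = 1.
    rewrite lin1; last by rewrite mulrnAl mulrnAr nn mul0rn mul0rn.
    by rewrite mulrnAC -[n *+ N]mulr_natr -/n nn mul0rn addr0.
  rewrite E2 mulr1 natrD natrM /X mulnC mulr1n.
  by congr (_ + _); rewrite mulr_natl.
have hs' : s1 = s0 + (2 * (p * q))%N%:Z by rewrite -hs addrC subrK.
have cs1 : c ^ s1 = c ^ s0 * (1 + X * N)%N%:R by rewrite hs' exprzDr // -exprnP c2.
have cA : coprime (val (c ^ s0)) N.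
  have u : ((val (c ^ s0))%:R : 'Z_M) \is a GRing.unit.
    by rewrite (@Zp_valr M); apply: unitrXz.
  move: u; rewrite (@unitZpE M) //.
  by rewrite /M coprime_pexpl // coprime_sym.
rewrite cs1 val_Zp_mul // val_Zp_nat' // modnMmr ddlog_shift //.
exact: fin_int.
Qed.
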